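(* Assume $f$ has a unique global maximizer $g$. For every assignment $A$ and every $v\notin\mathcal C(A)$, if $1-g[v]\in\Psi_A[v]$ then there exists $S\subseteq\mathcal C(A)$ with $S\Rightarrow v$. If furthermore the problem contains no weak epistasis, then there exists $s\in\mathcal C(A)$ with $\{s\}\Rightarrow v$.
   Context: Fix $\ell\ge 1$, loci $V=\{0,\dots,\ell-1\}$, chromosomes $\vec y\in\{0,1\}^V$, and a fitness function $f:\{0,1\}^V\to\mathbb R$ to be maximized; $g$ denotes its unique global maximizer and $g[v]$ its allele at $v$. An assignment $A$ is a set of pairs $(v,a)$ ($v\in V$, $a\in\{0,1\}$) with at most one pair per locus; $A[v]=a$ if $(v,a)\in A$, else $A[v]=*$; coverage $\mathcal C(A)=\{v:A[v]\ne *\}$. $\Psi_A$ (constrained optima) is the set of chromosomes agreeing with $A$ on $\mathcal C(A)$ and of maximum fitness among all such chromosomes; $\Psi_A[v]=\{\psi_v:\psi\in\Psi_A\}$. Epistasis: for $v\in V$ and nonempty $S\subseteq V\setminus\{v\}$, $S\Rightarrow v$ iff for every $s\in S$ there exists an assignment $A$ with $\mathcal C(A)=S$ such that $\Psi_A[v]\neq\Psi_{A\setminus\{(s,A[s])\}}[v]$; the empty set is never epistatic. An epistasis $S\Rightarrow v$ with $|S|\ge2$ is weak if no nonempty proper subset $T\subsetneq S$ satisfies $T\Rightarrow v$; the problem contains no weak epistasis if no epistasis is weak. *)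

(* Defs.v *)
From mathcomp Require Import all_boot all_order all_algebra.
From mathcomp Require Import reals.
Set Implicit Arguments. Unset Strict Implicit. Unset Printing Implicit Defensive.
Import Order.TTheory GRing.Theory Num.Theory.
Local Open Scope ring_scope.

Definition chrom (l : nat) := {ffun 'I_l -> bool}.

(* An assignment: at most one allele per locus; None = "*" (unassigned). *)
Definition assignment (l : nat) := {ffun 'I_l -> option bool}.

Definition coverage l (A : assignment l) : {set 'I_l} :=
  [set v | A v != None].

Definition unassign l (A : assignment l) (s : 'I_l) : assignment l :=
  [ffun v => if v == s then None else A v].

Definition agrees l (A : assignment l) (y : chrom l) : bool :=
  [forall v, if A v is Some a then y v == a else true].

Definition Psi (R : realType) l (f : chrom l -> R) (A : assignment l)
  : {set chrom l} :=
  [set y | agrees A y && [forall z, agrees A z ==> (f z <= f y)]].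

Definition Psi_at (R : realType) l (f : chrom l -> R) (A : assignment l)
  (v : 'I_l) : {set bool} :=
  [set (y : chrom l) v | y in Psi f A].

Definition epistatic (R : realType) l (f : chrom l -> R) (S : {set 'I_l})
  (v : 'I_l) : Prop :=
  S != set0 /\ v \notin S /\
  forall s, s \in S ->
    exists A : assignment l,
      coverage A = S /\ Psi_at f A v != Psi_at f (unassign A s) v.

Definition weak_epistasis (R : realType) l (f : chrom l -> R) (S : {set 'I_l})
  (v : 'I_l) : Prop :=
  epistatic f S v /\ (2 <= #|S|)%N /\
  ~ (exists T : {set 'I_l}, T != set0 /\ T \proper S /\ epistatic f T v).

Definition no_weak_epistasis (R : realType) l (f : chrom l -> R) : Prop :=
  forall S v, ~ weak_epistasis f S v.

Definition unique_global_max (R : realType) l (f : chrom l -> R) (g : chrom l)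
  : Prop :=
  forall y, y != g -> f y < f g.

(* Main.v *)
Require Import Defs.
From mathcomp Require Import all_boot all_order all_algebra.
From mathcomp Require Import reals.
From Stdlib Require Import Classical.
Set Implicit Arguments. Unset Strict Implicit. Unset Printing Implicit Defensive.
Import Order.TTheory GRing.Theory Num.Theory.
Local Open Scope ring_scope.

Definition restrict l (A : assignment l) (T : {set 'I_l}) : assignment l :=
  [ffun u => if u \in T then A u else None].

Lemma coverage_restrict l (A : assignment l) (T : {set 'I_l}) :
  T \subset coverage A -> coverage (restrict A T) = T.
Proof.
move=> sub; apply/setP => u; rewrite !inE ffunE; case: ifP => uT //.
by have := subsetP sub u uT; rewrite inE.
Qed.

Lemma unassign_restrict l (A : assignment l) (T : {set 'I_l}) s :
  unassign (restrict A T) s = restrict A (T :\ s).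
Proof.
apply/ffunP => u; rewrite !ffunE !inE.
by case: (u == s).
Qed.

Lemma Psi_empty (R : realType) l (f : chrom l -> R) g (hg : unique_global_max f g)
  (A : assignment l) y : y \in Psi f (restrict A set0) -> y = g.
Proof.
rewrite inE => /andP [_ /forallP H].
have := H g.
have -> : agrees (restrict A set0) g.
  by apply/forallP => u; rewrite ffunE inE.
move=> /= Hle.
case: (eqVneq y g) => // /hg Hlt.
by move: Hle; rewrite leNgt Hlt.
Qed.

Theorem proposition7 (R : realType) (l : nat) (hl : (1 <= l)%N)
  (f : chrom l -> R) (g : chrom l) (hg : unique_global_max f g) :
  forall (A : assignment l) (v : 'I_l),
    v \notin coverage A ->
    ~~ g v \in Psi_at f A v ->
    (exists S : {set 'I_l}, S \subset coverage A /\ epistatic f S v) /\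
    (no_weak_epistasis f ->
       exists s, s \in coverage A /\ epistatic f [set s] v).
Proof.
move=> A v vA Hin.
pose P T := ~~ g v \in Psi_at f (restrict A T) v.
have P0 : ~~ P set0.
  apply/negP; rewrite /P /Psi_at => /imsetP [y /(Psi_empty hg) -> ].
  by case: (g v).
have part1 : exists S : {set 'I_l}, S \subset coverage A /\ epistatic f S v.
  have key : forall n (T : {set 'I_l}), (#|T| <= n)%N -> T \subset coverage A -> P T ->
      exists S : {set 'I_l}, S \subset coverage A /\ epistatic f S v.
    elim=> [|n IH] T.
      rewrite leqn0 cards_eq0 => /eqP -> _ HP.
      by move/negP: P0.
    move=> HT sub HP.
    case: (boolP [exists s in T, P (T :\ s)]).
      case/exists_inP => s sT HPs.
      apply: (IH (T :\ s)) => //.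
        by rewrite -ltnS; apply: leq_trans HT; rewrite (cardsD1 s T) sT.
      by apply: subset_trans sub; apply: subsetDl.
    rewrite negb_exists_in => /forall_inP Hno.
    exists T; split => //; split; [|split].
    - by apply/eqP => T0; move: HP; rewrite T0 (negbTE P0).
    - by apply/negP => vT; move: vA; rewrite (subsetP sub v vT).
    - move=> s sT; exists (restrict A T); split; first exact: coverage_restrict.
      rewrite unassign_restrict; apply/negP => /eqP Heq.
      by move: (Hno s sT) HP; rewrite /P -Heq => /negP.
  apply: (key #|coverage A| (coverage A)) => //.
  rewrite /P.
  have -> : restrict A (coverage A) = A.
    by apply/ffunP => u; rewrite ffunE inE; case: ifP => // /negbFE /eqP ->.
  exact: Hin.
split => // nwe.
case: part1 => S [sub E].
have key : forall n (S : {set 'I_l}), (#|S| <= n)%N -> S \subset coverage A -> epistatic f S v ->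
    exists s, s \in coverage A /\ epistatic f [set s] v.
  elim=> [|n IH] S0.
    rewrite leqn0 cards_eq0 => /eqP -> _ [] /eqP; done.
  move=> HS sub0 E0.
  case: (leqP #|S0| 1) => Hs.
    have [s Hs1] : exists s, S0 = [set s].
      apply/cards1P; rewrite eqn_leq Hs card_gt0; by case: E0.
    exists s; split; last by rewrite -Hs1.
    by apply: (subsetP sub0); rewrite Hs1 set11.
  have [T [T0 [TS ET]]] : exists T : {set 'I_l}, T != set0 /\ T \proper S0 /\ epistatic f T v.
    apply: NNPP => Hn; apply: (nwe S0 v); split => //.
  apply: (IH T).
  - by rewrite -ltnS; apply: leq_trans HS; apply: proper_card.
  - exact: subset_trans (proper_sub TS) sub0.
  - exact: ET.
exact: (key #|S| S).
Qed.
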